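(* (Extended Perron's method.) Let $\Omega\subset\mathbb{R}^N$ be an open domain, let $g:\mathbb{R}^N\setminus\Omega\to\mathbb{R}$ be bounded, and let $\mathcal{A}:\mathbb{R}^N\times\mathcal{X}\times\mathbb{R}\to\mathbb{R}$ satisfy assumptions (a), (b), (c) below. Consider the DPP $\mathcal{A}(x,u,u(x))=0$ for $x\in\Omega$, $u=g$ on $\mathbb{R}^N\setminus\Omega$. Assume (H1) there exists at least one viscosity subsolution and (H2) all viscosity subsolutions are uniformly bounded from above. Let $\underline{S}$ be the set of all viscosity subsolutions. Then the function $$\overline{u}(x)=\sup_{v\in\underline{S}}v(x)\ \ (x\in\Omega),\qquad \overline{u}(x)=g(x)\ \ (x\in\mathbb{R}^N\setminus\Omega)$$ is a viscosity solution of the DPP. Respectively, if (H1* ) there exists at least one viscosity supersolution and (H2* ) all viscosity supersolutions are uniformly bounded from below, and $\overline{S}$ is the set of all viscosity supersolutions, then $\underline{u}(x)=\inf_{v\in\overline{S}}v(x)$ for $x\in\Omega$, $\underline{u}=g$ on $\mathbb{R}^N\setminus\Omega$, is a viscosity solution of the DPP.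
   Context: $\overline{\mathcal{X}}$ is the set of bounded functions $\mathbb{R}^N\to\mathbb{R}$, $\mathcal{X}\subset\overline{\mathcal{X}}$ a fixed subset. Assumptions: (a) $\varphi_1\le\varphi_2$ implies $\mathcal{A}(x,\varphi_2,s)\le\mathcal{A}(x,\varphi_1,s)$; (b) $s_1\le s_2$ implies $\mathcal{A}(x,\varphi,s_1)\le\mathcal{A}(x,\varphi,s_2)$; (c) for every $(x,\varphi)$ the map $s\mapsto\mathcal{A}(x,\varphi,s)$ has exactly one zero. $u\in\overline{\mathcal{X}}$ is a viscosity supersolution of the DPP if $u\ge g$ on $\mathbb{R}^N\setminus\Omega$ and, for each $x\in\Omega$, $\mathcal{A}(x,\varphi,u(x))\ge0$ for all $\varphi\in\mathcal{X}$ with $\varphi\le u$; a viscosity subsolution if $u\le g$ on $\mathbb{R}^N\setminus\Omega$ and, for each $x\in\Omega$, $\mathcal{A}(x,\varphi,u(x))\le0$ for all $\varphi\in\mathcal{X}$ with $\varphi\ge u$; a viscosity solution is a $u\in\overline{\mathcal{X}}$ that is both. *)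

(* Defs.v *)
From HB Require Import structures.
From mathcomp Require Import all_boot all_order all_algebra.
From mathcomp Require Import all_classical all_reals all_analysis.
Set Implicit Arguments. Unset Strict Implicit. Unset Printing Implicit Defensive.
Import Order.TTheory GRing.Theory Num.Theory.
Import numFieldNormedType.Exports.
Local Open Scope classical_set_scope.
Local Open Scope ring_scope.

Section DPP.
Variables (R : realType) (N : nat).
Notation pt := 'rV[R]_N.

Definition bounded_fn (f : pt -> R) : Prop := exists M : R, forall x, `|f x| <= M.

Variables (Omega : set pt) (g : pt -> R) (X : set (pt -> R))
  (A : pt -> (pt -> R) -> R -> R).

Definition assum_a : Prop := forall x phi1 phi2, X phi1 -> X phi2 ->
  (forall y, phi1 y <= phi2 y) -> forall s, A x phi2 s <= A x phi1 s.
Definition assum_b : Prop := forall x phi, X phi -> forall s1 s2,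
  s1 <= s2 -> A x phi s1 <= A x phi s2.
Definition assum_c : Prop := forall x phi, X phi ->
  exists s, A x phi s = 0 /\ forall t, A x phi t = 0 -> t = s.

Definition visc_super (u : pt -> R) : Prop :=
  bounded_fn u /\
  (forall x, ~ Omega x -> g x <= u x) /\
  (forall x, Omega x -> forall phi, X phi -> (forall y, phi y <= u y) ->
     0 <= A x phi (u x)).

Definition visc_sub (u : pt -> R) : Prop :=
  bounded_fn u /\
  (forall x, ~ Omega x -> u x <= g x) /\
  (forall x, Omega x -> forall phi, X phi -> (forall y, u y <= phi y) ->
     A x phi (u x) <= 0).

Definition visc_sol (u : pt -> R) : Prop := visc_super u /\ visc_sub u.

Definition perron_sup : pt -> R := fun x =>
  if `[< Omega x >] then sup [set v x | v in visc_sub] else g x.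
Definition perron_inf : pt -> R := fun x =>
  if `[< Omega x >] then inf [set v x | v in visc_super] else g x.

End DPP.

(* Main.v *)
Require Import Defs.
From HB Require Import structures.
From mathcomp Require Import all_boot all_order all_algebra.
From mathcomp Require Import all_classical all_reals all_analysis.
From mathcomp Require Import lra.
Import Order.TTheory GRing.Theory Num.Theory.
Import numFieldNormedType.Exports.
Local Open Scope classical_set_scope.
Local Open Scope ring_scope.

Section S.
Variables (R : realType) (N : nat) (Omega : set 'rV[R]_N)
  (g : 'rV[R]_N -> R) (X : set ('rV[R]_N -> R))
  (A : 'rV[R]_N -> ('rV[R]_N -> R) -> R -> R).
Hypotheses (ha : assum_a X A) (hb : assum_b X A) (hc : assum_c X A).
Hypothesis (hg : exists M : R, forall x, ~ Omega x -> `|g x| <= M).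
Hypothesis (h1 : exists v, visc_sub Omega g X A v).
Hypothesis (h2 : exists M : R, forall v, visc_sub Omega g X A v -> forall x, v x <= M).

Let S x := [set v x | v in visc_sub Omega g X A].
Let U := perron_sup Omega g X A.

Lemma U_in x : Omega x -> U x = sup (S x).
Proof. by move=> Ox; rewrite /U /perron_sup asboolT. Qed.
Lemma U_out x : ~ Omega x -> U x = g x.
Proof. by move=> Ox; rewrite /U /perron_sup asboolF. Qed.

Lemma S_ub x : has_ubound (S x).
Proof. case: h2 => M HM; exists M => _ [v Hv <-]; exact: HM. Qed.
Lemma S_ne x : S x !=set0.
Proof. case: h1 => v Hv; by exists (v x), v. Qed.

Lemma sub_le_U v : visc_sub Omega g X A v -> forall y, v y <= U y.
Proof.
move=> Hv y; have [Oy|Oy] := pselect (Omega y).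
  rewrite U_in //; apply: ub_le_sup; [exact: S_ub| by exists v].
rewrite U_out //; exact: Hv.2.1 y Oy.
Qed.

Lemma U_le_M : exists M, forall y, Omega y -> U y <= M.
Proof.
case: h2 => M HM; exists M => y Oy; rewrite U_in //.
apply: ge_sup; first exact: S_ne.
by move=> _ [v Hv <-]; exact: HM.
Qed.

Lemma U_bounded : bounded_fn U.
Proof.
case: h1 => v0 Hv0; have [[M0 HM0] _] := Hv0; case: U_le_M => M HM; case: hg => Mg HMg.
exists (`|M0| + `|M| + `|Mg|) => y.
have e1 := ler_norm M0; have e2 := ler_norm M; have e3 := ler_norm Mg.
have e4 := normr_ge0 M0; have e5 := normr_ge0 M; have e6 := normr_ge0 Mg.
have [Oy|Oy] := pselect (Omega y).
  have f1 := sub_le_U _ Hv0 y; have f2 := HM y Oy; have := HM0 y.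
  rewrite !ler_norml => /andP[f3 f4]; apply/andP; split; lra.
rewrite U_out //; have := HMg y Oy; rewrite !ler_norml => /andP[f3 f4].
apply/andP; split; lra.
Qed.

Lemma U_sub : visc_sub Omega g X A U.
Proof.
split; first exact: U_bounded.
split; first by move=> x Ox; rewrite U_out.
move=> x Ox phi Xphi Hphi.
have [s0 [Hs0 Huniq]] := hc x _ Xphi.
have Hle : forall v, visc_sub Omega g X A v -> v x <= s0.
  move=> v Hv; rewrite leNgt; apply/negP => lt.
  have h3 : A x phi (v x) <= 0.
    apply: Hv.2.2 => // y; exact: le_trans (sub_le_U _ Hv y) (Hphi y).
  have h4 := hb x _ Xphi _ _ (ltW lt); rewrite Hs0 in h4.
  have : v x = s0 by apply: Huniq; apply/eqP; rewrite eq_le h3 h4.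
  by move=> e; rewrite e ltxx in lt.
have : U x <= s0.
  rewrite U_in //; apply: ge_sup; first exact: S_ne.
  by move=> _ [v Hv <-]; exact: Hle.
by move/(hb x _ Xphi _ _); rewrite Hs0.
Qed.

Lemma U_super : visc_super Omega g X A U.
Proof.
split; first exact: U_bounded.
split; first by move=> x Ox; rewrite U_out.
move=> x Ox phi Xphi Hphi.
rewrite leNgt; apply/negP => Hneg.
have [s0 [Hs0 Huniq]] := hc x _ Xphi.
have lt : U x < s0.
  rewrite ltNge; apply/negP => le; have := hb x _ Xphi _ _ le; rewrite Hs0 => h.
  by have := lt_le_trans Hneg h; rewrite ltxx.
pose w := fun y => if y == x then s0 else U y.
have Uw : forall y, U y <= w y.
  by move=> y; rewrite /w; case: eqP => [->|_]; [exact: ltW|].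
have wsub : visc_sub Omega g X A w.
  split.
    case: U_bounded => B HB; exists (`|B| + `|s0|) => y; rewrite /w.
    have e1 := ler_norm B; have e4 := normr_ge0 B; have e5 := normr_ge0 s0.
    case: eqP => _.
      lra.
    have := HB y; lra.
  split.
    move=> y Oy; rewrite /w; case: eqP => [e|_]; first by rewrite e in Oy.
    by rewrite U_out.
  move=> y Oy psi Xpsi Hpsi; rewrite /w; case: eqP => [->|_].
    have := ha x _ _ Xphi Xpsi (fun z => le_trans (Hphi z) (le_trans (Uw z) (Hpsi z))) s0.
    by rewrite Hs0.
  apply: U_sub.2.2 => // z; exact: le_trans (Uw z) (Hpsi z).
have := sub_le_U _ wsub x; rewrite /w eqxx => h.
by have := lt_le_trans lt h; rewrite ltxx.
Qed.

Lemma U_sol : visc_sol Omega g X A U.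
Proof. split; [exact: U_super | exact: U_sub]. Qed.
End S.

Set Implicit Arguments. Unset Strict Implicit.
Section Dual.
Variables (R : realType) (N : nat) (Omega : set 'rV[R]_N)
  (g : 'rV[R]_N -> R) (X : set ('rV[R]_N -> R))
  (A : 'rV[R]_N -> ('rV[R]_N -> R) -> R -> R).

Definition g' := fun x => - g x.
Definition X' := [set phi : 'rV[R]_N -> R | X (fun y => - phi y)].
Definition A' := fun x (phi : 'rV[R]_N -> R) s => - A x (fun y => - phi y) (- s).

Lemma negK (u : 'rV[R]_N -> R) : (fun y => - - u y) = u.
Proof. by apply/funext => y; rewrite opprK. Qed.

Lemma bnd_neg (u : 'rV[R]_N -> R) : bounded_fn u -> bounded_fn (fun y => - u y).
Proof. by case=> M HM; exists M => y; rewrite normrN. Qed.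

Lemma super_sub' u : visc_super Omega g X A u <-> visc_sub Omega g' X' A' (fun y => - u y).
Proof.
split.
  case=> hB [hO hI]; split; first exact: bnd_neg.
  split; first by move=> x Ox; rewrite /g' lerN2; exact: hO.
  move=> x Ox phi Xphi Hphi; rewrite /A' opprK oppr_le0; apply: hI => // y.
  by rewrite -lerN2 opprK.
case=> hB [hO hI]; split; first by rewrite -(negK u); exact: bnd_neg.
split; first by move=> x Ox; rewrite -lerN2; exact: hO.
move=> x Ox phi Xphi Hphi; have := hI x Ox (fun y => - phi y).
rewrite /A' /X' /= negK opprK oppr_le0; apply => // y; by rewrite lerN2.
Qed.

Lemma sub_super' u : visc_sub Omega g X A u <-> visc_super Omega g' X' A' (fun y => - u y).
Proof.
split.
  case=> hB [hO hI]; split; first exact: bnd_neg.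
  split; first by move=> x Ox; rewrite /g' lerN2; exact: hO.
  move=> x Ox phi Xphi Hphi; rewrite /A' opprK oppr_ge0; apply: hI => // y.
  by rewrite -lerN2 opprK.
case=> hB [hO hI]; split; first by rewrite -(negK u); exact: bnd_neg.
split; first by move=> x Ox; rewrite -lerN2; exact: hO.
move=> x Ox phi Xphi Hphi; have := hI x Ox (fun y => - phi y).
rewrite /A' /X' /= negK opprK oppr_ge0; apply => // y; by rewrite lerN2.
Qed.

Lemma inf_eq : perron_inf Omega g X A = (fun y => - perron_sup Omega g' X' A' y).
Proof.
apply/funext => x; rewrite /perron_inf /perron_sup.
case: (asboolP (Omega x)) => Ox; last by rewrite /g' opprK.
rewrite /inf; congr (- sup _); apply/seteqP; split.
  move=> _ [_ [v Hv <-] <-]; exists (fun y => - v y) => //; exact/super_sub'.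
move=> _ [v Hv <-]; exists (- v x) => //; last by rewrite opprK.
exists (fun y => - v y); last by [].
by apply/super_sub'; rewrite negK.
Qed.

Lemma assum_dual : assum_a X A -> assum_b X A -> assum_c X A ->
  [/\ assum_a X' A', assum_b X' A' & assum_c X' A'].
Proof.
move=> ha hb hc; split.
- move=> x phi1 phi2 X1 X2 H s; rewrite /A' lerN2; apply: ha => // y.
  by rewrite lerN2.
- move=> x phi Xphi s1 s2 le; rewrite /A' lerN2; apply: hb => //.
  by rewrite lerN2.
- move=> x phi Xphi; have [s [Hs Hu]] := hc x _ Xphi; exists (- s); split.
    by rewrite /A' opprK Hs oppr0.
  move=> t; rewrite /A' => /eqP; rewrite oppr_eq0 => /eqP/Hu <-.
  by rewrite opprK.
Qed.
End Dual.
Theorem mainTheorem6 (R : realType) (N : nat) (Omega : set 'rV[R]_N)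
  (g : 'rV[R]_N -> R) (X : set ('rV[R]_N -> R))
  (A : 'rV[R]_N -> ('rV[R]_N -> R) -> R -> R) :
  open Omega -> connected Omega ->
  (exists M : R, forall x, ~ Omega x -> `|g x| <= M) ->
  (forall phi, X phi -> bounded_fn phi) ->
  assum_a X A -> assum_b X A -> assum_c X A ->
  ((exists v, visc_sub Omega g X A v) ->
   (exists M : R, forall v, visc_sub Omega g X A v -> forall x, v x <= M) ->
   visc_sol Omega g X A (perron_sup Omega g X A)) /\
  ((exists v, visc_super Omega g X A v) ->
   (exists M : R, forall v, visc_super Omega g X A v -> forall x, M <= v x) ->
   visc_sol Omega g X A (perron_inf Omega g X A)).
Proof.
move=> _ _ hg _ ha hb hc; split.
  by move=> h1 h2; apply: U_sol.
move=> [v Hv] [M HM].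
have [ha' hb' hc'] := assum_dual ha hb hc.
have hg' : exists M : R, forall x, ~ Omega x -> `|g' g x| <= M.
  by case: hg => M' HM'; exists M' => x Ox; rewrite /g' normrN; exact: HM'.
have h1 : exists v, visc_sub Omega (g' g) (X' X) (A' A) v.
  by exists (fun y => - v y); apply/super_sub'.
have h2 : exists M : R, forall v, visc_sub Omega (g' g) (X' X) (A' A) v -> forall x, v x <= M.
  exists (- M) => w Hw x; rewrite -(negK w) in Hw.
  have {}Hw := (@super_sub' R N Omega g X A (fun y => - w y)).2 Hw; rewrite -(opprK (w x)) lerN2; exact: (HM _ Hw x).
have [Hsup Hsub] := U_sol _ _ _ _ _ _ ha' hb' hc' hg' h1 h2.
rewrite inf_eq; split.
  by apply/super_sub'; rewrite negK.
by apply/sub_super'; rewrite negK.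
Qed.
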